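(* Let $q\ge2$ be an integer and $\eta\in(0,1-1/q]$. Suppose $\mathcal{C}\subseteq[q]^n$ is a code such that for every $c\in\mathcal{C}$ there are at most $A$ codewords $c'\in\mathcal{C}$ (including $c$ itself) with $\delta(c,c')<\eta$. Then for every integer $L\ge2$, $\mathcal{C}$ is $(J_q(\eta-\eta/L),\,AL-1)$-list decodable.
   Context: $[q]=\{0,1,\dots,q-1\}$. For $x,y\in[q]^n$, $\delta(x,y)$ is the fraction of coordinates $i$ with $x_i\ne y_i$. A code $\mathcal{C}\subseteq[q]^n$ is $(\rho,\ell)$-list decodable if for every $y\in[q]^n$ the number of $c\in\mathcal{C}$ with $\delta(c,y)<\rho$ is at most $\ell$. The Johnson radius function is $J_q(x)=\frac{q-1}{q}\Big(1-\sqrt{1-\frac{qx}{q-1}}\Big)$ for $x\in[0,1-1/q]$. *)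

(* Defs.v *)
From HB Require Import structures.
From mathcomp Require Import all_boot all_order all_algebra.
From mathcomp Require Import reals.
Unset Printing Implicit Defensive.
Import Order.TTheory GRing.Theory Num.Theory.
Local Open Scope ring_scope.

Definition word (q n : nat) := {ffun 'I_n -> 'I_q}.

Definition delta (R : realType) {q n : nat} (x y : word q n) : R :=
  #|[set i : 'I_n | x i != y i]|%:R / n%:R.

Definition list_decodable (R : realType) {q n : nat} (C : {set word q n})
    (rho : R) (l : nat) : Prop :=
  forall y : word q n, (#|[set c in C | (delta R c y < rho)%R]| <= l)%N.

Definition Jq (R : realType) (q : nat) (x : R) : R :=
  (q%:R - 1) / q%:R * (1 - Num.sqrt (1 - q%:R * x / (q%:R - 1))).
Arguments delta R {q n} x y.
Arguments list_decodable R {q n} C rho l.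
Arguments Jq R q x.

(* Main.v *)
Require Import Defs.
From HB Require Import structures.
From mathcomp Require Import all_boot all_order all_algebra.
From mathcomp Require Import reals.
From mathcomp Require Import ring lra zify.
Import Order.TTheory GRing.Theory Num.Theory.
Local Open Scope ring_scope.


Section Aux.
Variable R : realType.

Lemma sumD' (I : Type) (r : seq I) (P : pred I) (F G : I -> R) :
  \sum_(i <- r | P i) (F i + G i) = \sum_(i <- r | P i) F i + \sum_(i <- r | P i) G i.
Proof. exact: big_split. Qed.

Lemma cs_sum (I : finType) (A : pred I) (z : I -> R) :
  (\sum_(i in A) z i) ^+ 2 <= #|A|%:R * \sum_(i in A) z i ^+ 2.
Proof.
have H : 0 <= \sum_(i in A) \sum_(j in A) (z i - z j) ^+ 2.
  by apply: sumr_ge0 => i _; apply: sumr_ge0 => j _; exact: sqr_ge0.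
have E : \sum_(i in A) \sum_(j in A) (z i - z j) ^+ 2 =
   2 * (#|A|%:R * \sum_(i in A) z i ^+ 2) - 2 * (\sum_(i in A) z i) ^+ 2.
  set s := \sum_(i in A) z i; set Q := \sum_(i in A) z i ^+ 2.
  have Hi : forall i, \sum_(j in A) (z i - z j) ^+ 2 =
     #|A|%:R * z i ^+ 2 - 2 * z i * s + Q.
    move=> i.
    have -> : \sum_(j in A) (z i - z j) ^+ 2 =
      \sum_(j in A) (z i ^+ 2 - (2 * z i) * z j + z j ^+ 2).
      by apply: eq_bigr => j _; ring.
    rewrite sumD' sumrB sumr_const -(mulr_natl (z i ^+ 2)) -mulr_sumr -/s -/Q; ring.
  under eq_bigr => i _ do rewrite Hi.
  rewrite sumD' sumrB sumr_const -(mulr_natl Q) -mulr_suml -!mulr_sumr -/s -/Q.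
  ring.
rewrite E in H; lra.
Qed.

Lemma sum_ind (q : nat) (c : 'I_q) (f : 'I_q -> R) :
  \sum_a (c == a)%:R * f a = f c.
Proof.
rewrite (bigD1 c) //= eqxx mul1r big1 ?addr0 // => a /negbTE.
by rewrite eq_sym => ->; rewrite mul0r.
Qed.


Lemma neq_nat (q : nat) (b c : 'I_q) : (b != c)%:R = 1 - (b == c)%:R :> R.
Proof. by case: eqP => _; rewrite ?subrr ?subr0. Qed.

Lemma coord_bound (q n : nat) (T : {set word q n}) (y : word q n) (i : 'I_n) :
  (1 < q)%N ->
  ((q%:R : R) - 1) * (\sum_(x in T) \sum_(x' in T) (x i != x' i)%:R) <=
  2 * (q%:R - 1) * #|T|%:R * (\sum_(x in T) (x i != y i)%:R)
   - q%:R * (\sum_(x in T) (x i != y i)%:R) ^+ 2.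
Proof.
move=> hq.
set m : R := #|T|%:R.
set e := \sum_(x in T) (x i != y i)%:R.
set Di := \sum_(x in T) \sum_(x' in T) _.
pose N a := \sum_(x in T) (x i == a)%:R : R.
have one : forall c : 'I_q, \sum_a (c == a)%:R = 1 :> R.
  move=> c; have := sum_ind _ c (fun _ => 1 : R).
  by under eq_bigr => a _ do rewrite mulr1.
have hNs : \sum_a N a = m.
  rewrite /N exchange_big /=.
  under eq_bigr => x _ do rewrite one.
  by rewrite sumr_const.
have he : e = m - N (y i).
  rewrite /e /N /m.
  under eq_bigr => x _ do rewrite neq_nat.
  by rewrite sumrB sumr_const.
have hS : \sum_a N a ^+ 2 = \sum_(x in T) \sum_(x' in T) (x i == x' i)%:R.
  have -> : \sum_a N a ^+ 2 =
     \sum_a \sum_(x in T) \sum_(x' in T) ((x i == a)%:R * (x' i == a)%:R).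
    apply: eq_bigr => a _; rewrite /N expr2 mulr_suml; apply: eq_bigr => x _.
    by rewrite mulr_sumr.
  rewrite exchange_big /=; apply: eq_bigr => x _.
  rewrite exchange_big /=; apply: eq_bigr => x' _.
  by rewrite sum_ind eq_sym.
have hD : Di = m ^+ 2 - \sum_a N a ^+ 2.
  rewrite hS /Di /m.
  under eq_bigr => x _ do under eq_bigr => x' _ do rewrite neq_nat.
  under eq_bigr => x _ do rewrite sumrB sumr_const.
  by rewrite sumrB sumr_const expr2 -(mulr_natr (#|T|%:R : R)).
set b := y i.
have hNs' := hNs; rewrite (bigD1 b) //= in hNs'.
have hS2 : \sum_a N a ^+ 2 = N b ^+ 2 + \sum_(a | a != b) N a ^+ 2.
  by rewrite (bigD1 b).
have hcs : (\sum_(a | a != b) N a) ^+ 2 <= (q%:R - 1) * \sum_(a | a != b) N a ^+ 2.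
  have := cs_sum _ (predC1 b) N.
  rewrite cardC1 card_ord.
  have -> : ((q.-1)%:R : R) = q%:R - 1.
    by rewrite -[in RHS](prednK (ltnW hq)) mulrSr addrK.
  by [].
rewrite hD hS2 he.
move: hcs hNs'.
set Sb := \sum_(a | a != b) N a.
set S2 := \sum_(a | a != b) N a ^+ 2.
move=> hcs hNs'.
have hq' : (1 : R) < q%:R by rewrite ltr1n.
have -> : N b = m - Sb by rewrite -hNs' addrK.
have -> : m - (m - Sb) = Sb by ring.
nra.
Qed.

Definition dist {q n : nat} (x y : word q n) : R := \sum_(i < n) (x i != y i)%:R.

Lemma johnson (q n : nat) (T : {set word q n}) (y : word q n) :
  (1 < q)%N ->
  ((q%:R : R) - 1) * n%:R * (\sum_(x in T) \sum_(x' in T) dist x x') <=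
  2 * (q%:R - 1) * n%:R * #|T|%:R * (\sum_(x in T) dist x y)
   - q%:R * (\sum_(x in T) dist x y) ^+ 2.
Proof.
move=> hq.
pose e i := \sum_(x in T) (x i != y i)%:R : R.
pose Di i := \sum_(x in T) \sum_(x' in T) (x i != x' i)%:R : R.
have hE : \sum_(x in T) dist x y = \sum_(i < n) e i.
  by rewrite /dist /e exchange_big.
have hD : \sum_(x in T) \sum_(x' in T) dist x x' = \sum_(i < n) Di i.
  rewrite /dist /Di.
  under eq_bigr => x _ do rewrite exchange_big /=.
  by rewrite exchange_big.
rewrite hE hD.
have hsum : ((q%:R : R) - 1) * \sum_(i < n) Di i <=
   2 * (q%:R - 1) * #|T|%:R * (\sum_(i < n) e i) - q%:R * \sum_(i < n) e i ^+ 2.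
  rewrite mulr_sumr mulr_sumr mulr_sumr -sumrB.
  by apply: ler_sum => i _; apply: coord_bound.
have hcs : (\sum_(i < n) e i) ^+ 2 <= n%:R * \sum_(i < n) e i ^+ 2.
  have := cs_sum _ 'I_n e; rewrite card_ord; exact.
have hq' : (1 : R) < q%:R by rewrite ltr1n.
have hn : (0 : R) <= n%:R by [].
set S := \sum_(i < n) e i; set S2 := \sum_(i < n) e i ^+ 2.
move: hsum hcs; rewrite -/S -/S2 => hsum hcs.
set DD := \sum_(i < n) Di i.
have h1 := ler_wpM2l hn hsum.
have h2 : (q%:R : R) * S ^+ 2 <= q%:R * (n%:R * S2).
  by apply: ler_wpM2l => //; lra.
move: h1 h2 hq' hn; rewrite -/DD.
move: (q%:R : R) (n%:R : R) (#|T|%:R : R) => Q N M h1 h2 hQ hN.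
nra.
Qed.

End Aux.

Lemma final_alg (R : realType) (Q eta Lr m nr D E : R) :
  1 < Q -> 0 < eta -> eta <= 1 - Q^-1 -> 2 <= Lr -> Lr <= m -> 0 < nr ->
  0 <= E ->
  E < m * ((Q - 1) / Q * (1 - Num.sqrt (1 - Q * (eta - eta / Lr) / (Q - 1)))) * nr ->
  m * (m - 1) * (eta * nr) <= D ->
  (Q - 1) * nr * D <= 2 * (Q - 1) * nr * m * E - Q * E ^+ 2 -> False.
Proof.
move=> hQ he he1 hL hLm hn hE0 hE hD hJ.
set et := eta - eta / Lr in hE.
set rho := (Q - 1) / Q * _ in hE.
have hQ0 : Q != 0 by apply/eqP; lra.
have hQ1 : Q - 1 != 0 by apply/eqP; lra.
have hL0 : Lr != 0 by apply/eqP; lra.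
have hm0 : m != 0 by apply/eqP; lra.
have hn0 : nr != 0 by apply/eqP; lra.
have hQpos : 0 < Q by lra.
have hetL : et = eta * (Lr - 1) / Lr by rewrite /et; field; rewrite ?hQ0 ?hQ1 ?hL0 ?hm0 ?hn0.
have het_pos : 0 < et.
  rewrite hetL; apply: divr_gt0; last lra.
  apply: mulr_gt0; lra.
have het_lt : et < eta.
  rewrite /et; have : 0 < eta / Lr by apply: divr_gt0; lra.
  lra.
set t := 1 - Q * et / (Q - 1).
have ht0 : 0 <= t.
  rewrite /t subr_ge0 ler_pdivrMr; last lra.
  have : eta * Q <= Q - 1.
    have := ler_wpM2r (ltW hQpos) he1.
    by rewrite mulrBl mul1r mulVf.
  nra.
set s := Num.sqrt t.
have hs0 : 0 <= s by apply: sqrtr_ge0.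
have hs2 : s ^+ 2 = t by apply: sqr_sqrtr.
have key : (Q - 1) * et = 2 * (Q - 1) * rho - Q * rho ^+ 2.
  have -> : 2 * (Q - 1) * rho - Q * rho ^+ 2 = (Q - 1) ^+ 2 / Q * (1 - s ^+ 2).
    by rewrite /rho -/s; field; rewrite ?hQ0 ?hQ1 ?hL0 ?hm0 ?hn0.
  by rewrite hs2 /t; field; rewrite ?hQ0 ?hQ1 ?hL0 ?hm0 ?hn0.
have hrho : Q * rho <= Q - 1.
  rewrite /rho -/s.
  have -> : Q * ((Q - 1) / Q * (1 - s)) = (Q - 1) * (1 - s) by field.
  nra.
have hmn : 0 < m * nr by apply: mulr_gt0; lra.
set r := E / (m * nr).
have hEr : E = r * (m * nr) by rewrite /r; field; rewrite ?hQ0 ?hQ1 ?hL0 ?hm0 ?hn0.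
have hr0 : 0 <= r by apply: divr_ge0; lra.
have hrr : r < rho.
  rewrite /r ltr_pdivrMr //.
  move: hE; rewrite -/rho; lra.
have hA : (Q - 1) * ((m - 1) / m * eta) <= 2 * (Q - 1) * r - Q * r ^+ 2.
  have h1 : (Q - 1) * nr * (m * (m - 1) * (eta * nr)) <= (Q - 1) * nr * D.
    apply: ler_wpM2l => //; apply: mulr_ge0; lra.
  have h2 := le_trans h1 hJ.
  have e1 : (Q - 1) * nr * (m * (m - 1) * (eta * nr)) =
     (m * nr) ^+ 2 * ((Q - 1) * ((m - 1) / m * eta)) by field.
  have e2 : 2 * (Q - 1) * nr * m * E - Q * E ^+ 2 =
     (m * nr) ^+ 2 * (2 * (Q - 1) * r - Q * r ^+ 2) by rewrite hEr; ring.
  rewrite e1 e2 in h2.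
  by rewrite -(ler_pM2l (exprn_gt0 2 hmn)).
have hB : et <= (m - 1) / m * eta.
  have -> : (m - 1) / m * eta = et + eta * (m - Lr) / (m * Lr).
    by rewrite hetL; field; rewrite ?hQ0 ?hQ1 ?hL0 ?hm0 ?hn0.
  have : 0 <= eta * (m - Lr) / (m * Lr).
    apply: divr_ge0; apply: mulr_ge0; lra.
  lra.
have hC : 2 * (Q - 1) * r - Q * r ^+ 2 < 2 * (Q - 1) * rho - Q * rho ^+ 2.
  have -> : 2 * (Q - 1) * rho - Q * rho ^+ 2 = (2 * (Q - 1) * r - Q * r ^+ 2)
     + (rho - r) * (2 * (Q - 1) - Q * (rho + r)) by ring.
  have : 0 < (rho - r) * (2 * (Q - 1) - Q * (rho + r)).
    apply: mulr_gt0; first lra.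
    have : Q * r < Q * rho by rewrite ltr_pM2l.
    lra.
  lra.
have hB' : (Q - 1) * et <= (Q - 1) * ((m - 1) / m * eta).
  by apply: ler_wpM2l => //; lra.
lra.
Qed.

Lemma delta_dist (R : realType) (q n : nat) (x y : word q n) :
  delta R x y = dist R x y / n%:R.
Proof.
rewrite /delta /dist; congr (_ / _).
rewrite -sum1_card natr_sum big_mkcond /=; apply: eq_bigr => i _.
by rewrite inE; case: (x i != y i).
Qed.

Lemma dist_sym (R : realType) (q n : nat) (x y : word q n) : dist R x y = dist R y x.
Proof. by apply: eq_bigr => i _; rewrite eq_sym. Qed.

Lemma dist_ge0 (R : realType) (q n : nat) (x y : word q n) : 0 <= dist R x y.
Proof. by apply: sumr_ge0 => i _; rewrite ler0n. Qed.

Lemma dist_xx (R : realType) (q n : nat) (x : word q n) : dist R x x = 0.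
Proof. by apply: big1 => i _; rewrite eqxx. Qed.

Lemma delta_sym (R : realType) (q n : nat) (x y : word q n) : delta R x y = delta R y x.
Proof. by rewrite !delta_dist dist_sym. Qed.

Lemma delta_xx (R : realType) (q n : nat) (x : word q n) : delta R x x = 0.
Proof. by rewrite delta_dist dist_xx mul0r. Qed.

Theorem lemma2p5 (R : realType) (q n : nat) (eta : R) (C : {set word q n})
    (A L : nat) :
  (2 <= q)%N ->
  0 < eta -> eta <= 1 - q%:R^-1 ->
  (forall c, c \in C -> (#|[set c' in C | (delta R c c' < eta)%R]| <= A)%N) ->
  (2 <= L)%N ->
  list_decodable R C (Jq R q (eta - eta / L%:R)) (A * L - 1).
Proof.
move=> hq heta heta1 hA hL y.
set rho := Jq R q _.
set Lst := [set c in C | delta R c y < rho].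
pose P (S : {set word q n}) := (S \subset Lst) &&
  [forall x in S, forall x' in S, (x != x') ==> (eta <= delta R x x')].
have [S /maxsetP [/andP [sub /forall_inP pw] mx]] : {S | maxset P S}.
  apply: ex_maxset; exists set0; rewrite /P sub0set /=.
  by apply/forall_inP => x; rewrite inE.
have pw' : forall x x', x \in S -> x' \in S -> x != x' -> eta <= delta R x x'.
  by move=> x x' xS x'S; move: (pw x xS) => /forall_inP /(_ x' x'S) /implyP.
have cover : forall c, c \in Lst -> exists2 s, s \in S & delta R s c < eta.
  move=> c cL; case: (boolP (c \in S)) => cS; first by exists c; rewrite ?delta_xx.
  case: (boolP [exists s in S, delta R s c < eta]) => [/exists_inP [s ? ?] | /exists_inP hno].
    by exists s.
  exfalso.
  have PS : P (c |: S).
    rewrite /P subUset sub1set cL sub /=.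
    apply/forall_inP => x /setU1P hx; apply/forall_inP => x' /setU1P hx'.
    have nle : forall s, s \in S -> eta <= delta R s c.
      by move=> s sS; rewrite leNgt; apply/negP => h; apply: hno; exists s.
    apply/implyP; case: hx => [-> | xS]; case: hx' => [-> | x'S] nx.
    - by rewrite eqxx in nx.
    - by rewrite delta_sym; apply: nle.
    - exact: nle.
    - exact: pw'.
  have := mx _ PS (subsetUr _ _) => /setP /(_ c).
  by rewrite setU11 (negbTE cS).
have hcard : (#|Lst| <= #|S| * A)%N.
  rewrite -sum1_card -sum_nat_const.
  apply: (@leq_trans (\sum_(c in Lst) \sum_(s in S) ((delta R s c < eta)%R : nat))%N).
    apply: leq_sum => c cL; have [s sS hs] := cover c cL.
    by rewrite (bigD1 s) //= hs leq_addr.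
  rewrite exchange_big /=; apply: leq_sum => s sS.
  have sC : s \in C by have := subsetP sub s sS; rewrite inE => /andP [].
  apply: (@leq_trans #|[set c' in C | (delta R s c' < eta)%R]|); last exact: hA.
  rewrite -sum1_card big_mkcond [X in (_ <= X)%N]big_mkcond /=.
  apply: leq_sum => c _; rewrite !inE.
  case: (c \in C) => //=.
  by case: (delta R s c < eta); case: (delta R c y < rho).
have hS : (#|S| < L)%N.
  rewrite ltnNge; apply/negP => hLS.
  have [x0 [x1 [x0S x1S nx01]]] : exists x y, [/\ x \in S, y \in S & x != y].
    by apply/card_gt1P; apply: leq_trans hLS.
  have hn : (0 < n)%N.
    rewrite lt0n; apply/negP => /eqP n0.
    have := pw' _ _ x0S x1S nx01; rewrite delta_dist (_ : n%:R = 0 :> R); last by rewrite n0.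
    rewrite invr0 mulr0.
    by rewrite leNgt heta.
  have hnr : (0 : R) < n%:R by rewrite ltr0n.
  have hlt : forall x, x \in S -> dist R x y < rho * n%:R.
    move=> x xS; have := subsetP sub x xS; rewrite inE => /andP [_].
    by rewrite delta_dist ltr_pdivrMr.
  have hE : \sum_(x in S) dist R x y < #|S|%:R * rho * n%:R.
    have -> : #|S|%:R * rho * n%:R = \sum_(x in S) (rho * n%:R).
      by rewrite sumr_const -(mulr_natl (rho * n%:R)) mulrA.
    apply: ltr_sum; last exact: hlt.
    by apply/hasP; exists x0 => //; rewrite mem_index_enum.
  have hE0 : 0 <= \sum_(x in S) dist R x y by apply: sumr_ge0 => x _; apply: dist_ge0.
  have hD : #|S|%:R * (#|S|%:R - 1) * (eta * n%:R) <=
            \sum_(x in S) \sum_(x' in S) dist R x x'.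
    have -> : #|S|%:R * (#|S|%:R - 1) * (eta * n%:R) =
       \sum_(x in S) \sum_(x' in S) ((1 - (x == x')%:R) * (eta * n%:R)).
      have one : forall x, x \in S -> \sum_(x' in S) (x == x')%:R = 1 :> R.
        move=> x xS; rewrite (bigD1 x) //= eqxx big1 ?addr0 // => x' /andP [_ h].
        by rewrite eq_sym (negbTE h).
      rewrite (eq_bigr (fun _ => (#|S|%:R - 1) * (eta * n%:R))); last first.
        by move=> x xS; rewrite -mulr_suml sumrB sumr_const one.
      by rewrite sumr_const -(mulr_natl ((#|S|%:R - 1) * (eta * n%:R))) mulrA.
    apply: ler_sum => x xS; apply: ler_sum => x' x'S.
    case: eqP => [<- | /eqP nx]; first by rewrite subrr mul0r dist_ge0.
    rewrite subr0 mul1r -ler_pdivlMr // -delta_dist; exact: pw'.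
  have hJ := johnson R _ _ S y hq.
  apply: (final_alg R q%:R eta L%:R #|S|%:R n%:R _ _
    _ heta heta1 _ _ hnr hE0 _ hD hJ).
  - by rewrite ltr1n.
  - by rewrite ler_nat.
  - by rewrite ler_nat.
  - exact: hE.
rewrite /Lst; apply: (leq_trans hcard).
have : (#|S| <= L.-1)%N by rewrite -ltnS prednK // (leq_trans _ hL).
move: hS hL; clear; nia.
Qed.
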